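(* Let $G=(V,E)$ be a connected graph with $n$ vertices, $\tau$ a set of types with $|\tau|>1$, $f:\tau\to\mathbb{Q}_{\ge1}$ a fitness function, and $M_0\in\Omega_0(G,\tau)$. Suppose the types in $\tau$ have $k$ distinct fitnesses $f_1<f_2<\dots<f_k$. For $i\in\{1,\dots,k\}$ let $\ell_i=|f^{-1}(f_i)|$ and $\ell=\max_i\ell_i$. Then: (1) $\mathbb{E}(A(G,\tau,f,M_0))\le(\ell-1)n^6+\sum_{i=2}^k\frac{f_i}{f_i-f_{i-1}}(n+1)n^3$; (2) for every $j\in\{2,\dots,k\}$ and every type $\beta$ with $f(\beta)=f_j$, $\mathbb{E}(A_\beta(G,\tau,f,M_0))\le(\ell_j-1)n^6+\sum_{i=j}^k\frac{f_i}{f_i-f_{i-1}}(n+1)n^3$; (3) for every type $\beta$ with $f(\beta)=f_1$, $\mathbb{E}(A_\beta(G,\tau,f,M_0))\le(\ell_1-1)n^6+\sum_{i=2}^k\frac{f_i}{f_i-f_{i-1}}(n+1)n^3$.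
   Context: For $G=(V,E)$, $N(v)$ is the neighbourhood of $v$. For a state $S:V\to\tau$, $S|_{v\to w}$ equals $S$ except $w$ gets type $S(v)$. The Moran process $M(G,\tau,f,M_0)$: Markov chain on states from $M_0$; given $M_t$, choose $v$ with probability $f(M_t(v))/\sum_uf(M_t(u))$, then $w\in N(v)$ uniformly, set $M_{t+1}=M_t|_{v\to w}$. $V_j(t)=\{v:M_t(v)=j\}$. $\Omega_0(G,\tau)$ is the set of states $V\to\tau$ with range $\tau$. Absorption time of type $j$: $A_j(G,\tau,f,M_0)=\min\{t\in\mathbb{Z}_{\ge0}:V_j(t)=V\text{ or }V_j(t)=\emptyset\}$. Total absorption time: $A(G,\tau,f,M_0)=\min\{t\in\mathbb{Z}_{\ge0}: V_j(t)=V\text{ for some }j\in\tau\}$. *)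

(* Defs.v *)
From HB Require Import structures.
From mathcomp Require Import all_boot all_order all_algebra.
From mathcomp Require Import all_classical all_reals all_analysis.
Set Implicit Arguments. Unset Strict Implicit. Unset Printing Implicit Defensive.
Import Order.TTheory GRing.Theory Num.Theory.
Local Open Scope ring_scope.

Section Moran.
Variables (R : realType) (V tau : finType) (adj : rel V) (f : tau -> rat).

Definition state := {ffun V -> tau}.

Definition nbhd (v : V) : {set V} := [set w | adj v w].

Definition upd (S : state) (v w : V) : state :=
  [ffun x => if x == w then S v else S x].

Definition fitR (j : tau) : R := ratr (f j).
Definition totfit (S : state) : R := \sum_(u : V) fitR (S u).

Definition trans (S S' : state) : R :=
  \sum_(v : V) \sum_(w in nbhd v)
     (if S' == upd S v w then fitR (S v) / totfit S / (#|nbhd v|)%:R else 0).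

(* qdist T M0 t S = P(M_t = S and M_s \notin T for all s <= t) *)
Fixpoint qdist (T : pred state) (M0 : state) (t : nat) (S : state) : R :=
  match t with
  | 0 => if (S == M0) && ~~ T S then 1 else 0
  | t'.+1 => if T S then 0 else \sum_(S0 : state) qdist T M0 t' S0 * trans S0 S
  end.

Definition surv (T : pred state) (M0 : state) (t : nat) : R :=
  \sum_(S : state) qdist T M0 t S.

(* E(hitting time of T) = sum_{t >= 0} P(hit > t), in the extended reals *)
Definition exp_hit (T : pred state) (M0 : state) : \bar R :=
  (\sum_(t <oo) (surv T M0 t)%:E)%E.

Definition total_abs : pred state := fun S => [exists j, [forall v, S v == j]].
Definition type_abs (j : tau) : pred state :=
  fun S => [forall v, S v == j] || [forall v, S v != j].

Definition absA (M0 : state) : \bar R := exp_hit total_abs M0.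
Definition absAj (j : tau) (M0 : state) : \bar R := exp_hit (type_abs j) M0.

End Moran.

Definition in_Omega0 (V tau : finType) (S : {ffun V -> tau}) : Prop :=
  forall j : tau, exists v : V, S v = j.

Definition simple_graph (V : finType) (adj : rel V) : Prop :=
  symmetric adj /\ irreflexive adj.

Definition connected_graph (V : finType) (adj : rel V) : Prop :=
  forall u v : V, connect adj u v.

(* the distinct fitness values, increasing: f_1 < ... < f_k, stored 0-indexed *)
Definition fitvals (tau : finType) (f : tau -> rat) : seq rat :=
  sort <=%R (undup [seq f x | x <- enum tau]).
Definition nfit (tau : finType) (f : tau -> rat) : nat := size (fitvals f).
(* fv f i = f_{i+1} *)
Definition fv (tau : finType) (f : tau -> rat) (i : nat) : rat := nth 0 (fitvals f) i.
Definition ell (tau : finType) (f : tau -> rat) (i : nat) : nat :=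
  #|[set x | f x == fv f i]|.
Definition ellmax (tau : finType) (f : tau -> rat) : nat :=
  \max_(i < nfit f) ell f i.

(* Main.v *)
Require Import Defs.
From HB Require Import structures.
From mathcomp Require Import all_boot all_order all_algebra.
From mathcomp Require Import all_classical all_reals all_analysis.
From mathcomp Require Import lra ring.
Import Order.TTheory GRing.Theory Num.Theory.
Set Implicit Arguments. Unset Strict Implicit. Unset Printing Implicit Defensive.
Local Open Scope ring_scope.

Section Drift.
Variables (R : realType) (V tau : finType) (adj : rel V) (f : tau -> rat).
Hypothesis fge0 : forall x, 0 <= f x.

Local Notation st := (state V tau).
Local Notation trans := (trans R adj f).
Local Notation qdist := (qdist R adj f).

Definition dgr (x : V) : R := (#|nbhd adj x|)%:R.
Definition fitS (S : st) (x : V) : R := fitR R f (S x).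
Definition EPr (P : st -> R) (S : st) : R :=
  \sum_v \sum_(w in nbhd adj v) fitS S v / totfit R f S / dgr v * P (upd S v w).

Lemma fitR_ge0 j : 0 <= fitR R f j.
Proof. by rewrite /fitR ler0q. Qed.

Lemma totfit_ge0 (S : st) : 0 <= totfit R f S.
Proof. by apply: sumr_ge0 => i _; apply: fitR_ge0. Qed.

Lemma trans_ge0 (S S' : st) : 0 <= trans S S'.
Proof. rewrite /Defs.trans.
apply: sumr_ge0 => v _; apply: sumr_ge0 => w _; case: ifP => // _.
by apply: divr_ge0; [apply: divr_ge0; [apply: fitR_ge0 | apply: totfit_ge0] | apply: ler0n].
Qed.

Lemma trans_exp (P : st -> R) (S : st) : \sum_S' trans S S' * P S' = EPr P S.
Proof.
rewrite /Defs.trans /EPr.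
under eq_bigr do rewrite big_distrl /=.
rewrite exchange_big /=; apply: eq_bigr => v _.
under eq_bigr do rewrite big_distrl /=.
rewrite exchange_big /=; apply: eq_bigr => w _.
rewrite (bigD1 (upd S v w)) //= eqxx big1 ?addr0 // => S' /negbTE ->.
by rewrite mul0r.
Qed.

Lemma qdist_ge0 (T : pred st) (M0 : st) t S : 0 <= qdist T M0 t S.
Proof.
elim: t S => [|t IH] S /=; first by case: ifP.
case: ifP => // _; apply: sumr_ge0 => S0 _.
by rewrite mulr_ge0 ?IH ?trans_ge0.
Qed.

Lemma qdist_T (T : pred st) (M0 : st) t S : T S -> qdist T M0 t S = 0.
Proof. by case: t => [|t] /= ->; rewrite ?andbF. Qed.

Lemma drift_bound (T : pred st) (P : st -> R) M0 :
  (forall S, 0 <= P S) -> (forall S, ~~ T S -> EPr P S <= P S - 1) ->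
  (exp_hit R adj f T M0 <= (P M0)%:E)%E.
Proof.
move=> P0 HP.
pose Ph t := \sum_S qdist T M0 t S * P S.
have Ph0 t : 0 <= Ph t by apply: sumr_ge0 => S _; rewrite mulr_ge0 ?qdist_ge0.
have step t : Ph t.+1 <= Ph t - surv R adj f T M0 t.
  rewrite /Ph /=.
  apply: (@le_trans _ _ (\sum_S' (\sum_S qdist T M0 t S * trans S S') * P S')).
    apply: ler_sum => S' _; case: ifP => _; last by [].
    rewrite mul0r mulr_ge0 // sumr_ge0 // => S _.
    by rewrite mulr_ge0 ?qdist_ge0 ?trans_ge0.
  rewrite (eq_bigr (fun S' => \sum_S qdist T M0 t S * trans S S' * P S')); last by move=> S' _; rewrite mulr_suml.
  rewrite exchange_big /=.
  rewrite /surv -sumrB; apply: ler_sum => S _.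
  under eq_bigr do rewrite -mulrA.
  rewrite -big_distrr /= trans_exp.
  case TS: (T S); first by rewrite qdist_T // !mul0r subr0.
  rewrite -[X in _ - X](mulr1 (qdist T M0 t S)) -mulrBr.
  by rewrite ler_wpM2l ?qdist_ge0 // HP ?TS.
have sumb N : \sum_(0 <= t < N) surv R adj f T M0 t <= Ph 0 - Ph N.
  elim: N => [|N IH]; first by rewrite big_nil subrr.
  rewrite big_nat_recr //=.
  have := step N; lra.
have PhM : Ph 0 <= P M0.
  rewrite /Ph (bigD1 M0) //= eqxx big1 ?addr0.
    by case: (T M0) => /=; rewrite ?mul0r ?mul1r.
  by move=> S /negbTE ->; rewrite mul0r.
rewrite /exp_hit.
apply: lime_le.
  by apply: is_cvg_nneseries => n _ _; rewrite lee_fin /surv sumr_ge0 // => S _; apply: qdist_ge0.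
apply: nearW => N; rewrite sumEFin lee_fin.
have := sumb N; have := Ph0 N; lra.
Qed.

End Drift.
Section Moran2.
Variables (R : realType) (V tau : finType) (adj : rel V) (f : tau -> rat).
Hypothesis fge1 : forall x, 1 <= f x.
Hypothesis adjS : symmetric adj.
Hypothesis adjI : irreflexive adj.
Hypothesis conn : connected_graph adj.
Hypothesis nV : (1 < #|V|)%N.

Local Notation st := (state V tau).
Local Notation dg := (dgr R adj).
Local Notation fit := (fitS R f).
Local Notation EP := (@EPr R V tau adj f).
Local Notation W := (totfit R f).

Definition cc (x : V) : R := (dg x)^-1.
Definition pp (S : st) (v : V) : R := fit S v / W S / dg v.

Lemma fge0 x : 0 <= f x.
Proof. exact: le_trans (fge1 x). Qed.

Lemma edge_cross (P : pred V) u v : P u -> ~~ P v ->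
  exists x y, [&& adj x y, P x & ~~ P y].
Proof.
move=> Pu nPv; move: (conn u v) => /connectP [p pth vE].
elim: p u pth Pu vE => [|y p IH] u /=; first by move=> _ Pu vE; move: nPv; rewrite vE Pu.
move=> /andP [auy py] Pu vE.
case Py: (P y); first exact: IH py Py vE.
by exists u, y; rewrite auy Pu Py.
Qed.

Lemma dg_gt0 x : (0 < #|nbhd adj x|)%N.
Proof.
have [y yx] : exists y, y != x.
  move/card_gt1P: nV => [a [b [_ _ ab]]].
  case: (eqVneq a x) => [ax|ax]; last by exists a.
  by exists b; rewrite -ax eq_sym.
have nyx : ~~ (pred1 x) y by [].
have [a [b /and3P [ab /eqP ax nb]]] := @edge_cross (pred1 x) x y (eqxx x) nyx.
apply/card_gt0P; exists b; by rewrite inE -ax.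
Qed.

Lemma dg_pos x : 0 < dg x.
Proof. by rewrite /dgr ltr0n dg_gt0. Qed.

Lemma dg_le x : dg x <= (#|V|)%:R.
Proof. by rewrite /dgr ler_nat max_card. Qed.

Lemma cc_pos x : 0 < cc x.
Proof. by rewrite /cc invr_gt0 dg_pos. Qed.

Lemma cc_le1 x : cc x <= 1.
Proof. rewrite /cc invf_le1 ?dg_pos // /dgr ler1n; exact: dg_gt0. Qed.

Lemma n_pos : 0 < (#|V|)%:R :> R.
Proof. by rewrite ltr0n; apply: leq_trans nV. Qed.

Lemma cc_ge x : (#|V|%:R)^-1 <= cc x.
Proof. by rewrite /cc lef_pV2 ?posrE ?dg_pos ?n_pos // dg_le. Qed.

Lemma fit_ge1 (S : st) x : 1 <= fit S x.
Proof. by rewrite /fitS /fitR -(rmorph1 (ratr : rat -> R)) ler_rat fge1. Qed.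

Lemma W_pos (S : st) : 0 < W S.
Proof.
rewrite /totfit; apply: (@lt_le_trans _ _ (\sum_(u : V) (1 : R))).
  by rewrite sumr_const ltr0n; apply: leq_trans nV.
by apply: ler_sum => u _; apply: (fit_ge1 S u).
Qed.

Lemma pp_ge0 (S : st) v : 0 <= pp S v.
Proof.
rewrite /pp; apply: divr_ge0; last exact: ltW (dg_pos v).
apply: divr_ge0; last exact: ltW (W_pos S).
exact: le_trans (fit_ge1 S v).
Qed.

Lemma EP_sum1 (S : st) : \sum_v \sum_(w in nbhd adj v) pp S v = 1.
Proof.
under eq_bigr do rewrite sumr_const.
rewrite -[RHS](divff (lt0r_neq0 (W_pos S))) /totfit mulr_suml.
apply: eq_bigr => v _; rewrite /pp -mulr_natr -/(dg v) mulfVK //.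
exact: lt0r_neq0 (dg_pos v).
Qed.

Lemma EP_delta (P : st -> R) (S : st) :
  EP P S = P S + \sum_v \sum_(w in nbhd adj v) pp S v * (P (upd S v w) - P S).
Proof.
have E : \sum_v \sum_(w in nbhd adj v) pp S v * P S = P S.
  by under eq_bigr do rewrite -mulr_suml; rewrite -mulr_suml EP_sum1 mul1r.
rewrite -{1}E /EPr.
rewrite -big_split /=; apply: eq_bigr => v _.
rewrite -big_split /=; apply: eq_bigr => w _.
by rewrite /pp; ring.
Qed.


Definition Delta (P : st -> R) (S : st) : R :=
  \sum_v \sum_(w in nbhd adj v) pp S v * (P (upd S v w) - P S).

Lemma EP_Delta (P : st -> R) (S : st) : EP P S = P S + Delta P S.
Proof. exact: EP_delta. Qed.

Lemma EP_le (P Q : st -> R) (S : st) :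
  (forall v w, P (upd S v w) <= Q (upd S v w)) -> EP P S <= EP Q S.
Proof.
move=> H; rewrite /EPr; apply: ler_sum => v _; apply: ler_sum => w _.
by apply: ler_wpM2l; [exact: pp_ge0 | exact: H].
Qed.

Lemma EP_ext (P Q : st -> R) (S : st) :
  (forall v w, P (upd S v w) = Q (upd S v w)) -> EP P S = EP Q S.
Proof.
move=> H; rewrite /EPr; apply: eq_bigr => v _; apply: eq_bigr => w _.
by rewrite H.
Qed.

Lemma Delta_aff (P : st -> R) a b (S : st) :
  Delta (fun S' => a * P S' + b) S = a * Delta P S.
Proof.
rewrite /Delta mulr_sumr; apply: eq_bigr => v _.
rewrite mulr_sumr; apply: eq_bigr => w _.
ring.
Qed.

Lemma Delta_sum (I : Type) (r : seq I) (c : I -> R) (Q : I -> st -> R) (S : st) :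
  Delta (fun S' => \sum_(i <- r) c i * Q i S') S = \sum_(i <- r) c i * Delta (Q i) S.
Proof.
rewrite /Delta.
under [RHS]eq_bigr do rewrite mulr_sumr.
rewrite [RHS]exchange_big /=; apply: eq_bigr => v _.
under [RHS]eq_bigr do rewrite mulr_sumr.
rewrite [RHS]exchange_big /=; apply: eq_bigr => w _.
rewrite -sumrB mulr_sumr; apply: eq_bigr => i _.
ring.
Qed.

Definition Lg (g : tau -> R) (S : st) : R := \sum_x g (S x) * cc x.

Lemma Lg_upd g (S : st) v w :
  Lg g (upd S v w) = Lg g S + (g (S v) - g (S w)) * cc w.
Proof.
rewrite /Lg (bigD1 w) //= [in RHS](bigD1 w) //= /upd ffunE eqxx.
have -> : \sum_(i | i != w) g ([ffun x => if x == w then S v else S x] i) * cc i =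
          \sum_(i | i != w) g (S i) * cc i.
  by apply: eq_bigr => i /negbTE iw; rewrite ffunE iw.
ring.
Qed.

Definition Dl (g : tau -> R) (S : st) : R :=
  \sum_v \sum_(w in nbhd adj v) pp S v * ((g (S v) - g (S w)) * cc w).

Lemma Delta_Lg g (S : st) : Delta (Lg g) S = Dl g S.
Proof.
rewrite /Delta /Dl; apply: eq_bigr => v _; apply: eq_bigr => w _.
by rewrite Lg_upd addrC addKr.
Qed.

Lemma sym_sum (h : V -> V -> R) :
  \sum_v \sum_(w in nbhd adj v) h v w = \sum_v \sum_(w in nbhd adj v) h w v.
Proof.
under eq_bigr do rewrite big_mkcond /=.
under [RHS]eq_bigr do rewrite big_mkcond /=.
rewrite exchange_big /=; apply: eq_bigr => v _; apply: eq_bigr => w _.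
by rewrite !inE adjS.
Qed.

Lemma two_terms (F : V -> R) u v0 : u != v0 -> (forall v, 0 <= F v) ->
  F u + F v0 <= \sum_v F v.
Proof.
move=> uv F0; rewrite (bigD1 u) //= (bigD1 v0) 1?eq_sym //= addrA.
by rewrite lerDl sumr_ge0.
Qed.

Lemma one_term (G : V -> R) u w0 : adj u w0 -> (forall w, 0 <= G w) ->
  G w0 <= \sum_(w in nbhd adj u) G w.
Proof.
move=> a G0; rewrite (bigD1 w0) ?inE //= lerDl sumr_ge0 //.
Qed.

Lemma Dl_bound (g : tau -> R) (S : st) u v0 :
  (forall a b : tau, 0 <= (fitR R f a - fitR R f b) * (g a - g b)) ->
  adj u v0 ->
  0 <= Dl g S /\
  (fit S u - fit S v0) * (g (S u) - g (S v0)) * cc u * cc v0 / W S <= Dl g S.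
Proof.
move=> gm auv.
pose h v w := fit S v * cc v * cc w * (g (S v) - g (S w)).
pose t v w := (fit S v - fit S w) * (g (S v) - g (S w)) * cc v * cc w.
have t0 v w : 0 <= t v w.
  rewrite /t; apply: mulr_ge0; last exact: ltW (cc_pos _).
  by apply: mulr_ge0; [exact: gm | exact: ltW (cc_pos _)].
have DlE : Dl g S = (\sum_v \sum_(w in nbhd adj v) h v w) / W S.
  rewrite mulr_suml; apply: eq_bigr => v _; rewrite mulr_suml.
  by apply: eq_bigr => w _; rewrite /pp /h /cc; ring.
have X2 : 2 * (\sum_v \sum_(w in nbhd adj v) h v w) =
          \sum_v \sum_(w in nbhd adj v) t v w.
  rewrite mulr2n mulrDl mul1r {2}sym_sum -big_split /=; apply: eq_bigr => v _.
  rewrite -big_split /=; apply: eq_bigr => w _; rewrite /h /t; ring.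
have tsum0 : 0 <= \sum_v \sum_(w in nbhd adj v) t v w.
  by apply: sumr_ge0 => v _; apply: sumr_ge0 => w _.
have uv0 : u != v0 by apply/eqP => E; move: auv; rewrite E adjI.
have tb : 2 * t u v0 <= \sum_v \sum_(w in nbhd adj v) t v w.
  have F0 : forall v, 0 <= \sum_(w in nbhd adj v) t v w by move=> v; apply: sumr_ge0.
  have H := @two_terms (fun v => \sum_(w in nbhd adj v) t v w) u v0 uv0 F0.
  apply: le_trans H.
  have tsym : t v0 u = t u v0 by rewrite /t; ring.
  rewrite mulr2n mulrDl mul1r lerD //.
    by apply: one_term.
  by rewrite -tsym; apply: one_term; rewrite // adjS.
have Wp := W_pos S.
have k1 : forall x : R, 0 <= 2 * x -> 0 <= x by move=> x; lra.
have k2 : forall x y : R, 2 * y <= 2 * x -> y <= x by move=> x y; lra.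
have X0 := k1 _ (eq_ind_r (fun z => 0 <= z) tsum0 X2).
have tX := k2 _ _ (eq_ind_r (fun z => 2 * t u v0 <= z) tb X2).
split.
  by rewrite DlE divr_ge0 // ltW.
by rewrite DlE ler_pM2r ?invr_gt0.
Qed.


Definition phi (t : tau) (S : st) : R := Lg (fun x => (x == t)%:R) S.
Definition Qs (S : st) : R := \sum_t (phi t S) ^+ 2.
Definition Phi : R := \sum_x cc x.

Lemma sum_ind (F : tau -> R) a : \sum_t F t * (a == t)%:R = F a.
Proof.
rewrite (bigD1 a) //= eqxx mulr1 big1 ?addr0 // => t /negbTE.
by rewrite eq_sym => ->; rewrite mulr0.
Qed.

Lemma upd_same (S : st) v w : S v = S w -> upd S v w = S.
Proof. by move=> E; apply/ffunP => x; rewrite ffunE; case: eqP => // ->. Qed.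

Lemma Qs_upd (S : st) v w : Qs (upd S v w) - Qs S =
  2 * cc w * (phi (S v) S - phi (S w) S) + 2 * (S v != S w)%:R * cc w ^+ 2.
Proof.
case: (eqVneq (S v) (S w)) => [E|NE].
  by rewrite upd_same // E !subrr /= !mulr0 mul0r addr0.
rewrite /Qs -sumrB.
pose d t : R := (S v == t)%:R - (S w == t)%:R.
have E1 t : phi t (upd S v w) ^+ 2 - phi t S ^+ 2 =
            2 * cc w * (phi t S * d t) + cc w ^+ 2 * (d t * d t).
  by rewrite /phi Lg_upd /d; ring.
under eq_bigr do rewrite E1.
rewrite big_split /= -!mulr_sumr.
have -> : \sum_t phi t S * d t = phi (S v) S - phi (S w) S.
  by rewrite /d; under eq_bigr do rewrite mulrBr; rewrite sumrB !sum_ind.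
have -> : \sum_t d t * d t = 2.
  under eq_bigr do rewrite {2}/d mulrBr.
  rewrite sumrB !(sum_ind d) /d !eqxx eq_sym (negbTE NE) /=; ring.
by ring.
Qed.

Lemma phi_ge0 t (S : st) : 0 <= phi t S.
Proof. by apply: sumr_ge0 => x _; rewrite mulr_ge0 // ltW // cc_pos. Qed.

Lemma sum_phi (S : st) : \sum_t phi t S = Phi.
Proof.
rewrite /phi /Lg exchange_big /=; apply: eq_bigr => x _.
by rewrite -mulr_suml (eq_bigr (fun t => 1 * (S x == t)%:R)) ?sum_ind ?mul1r // => t _; rewrite mul1r.
Qed.

Lemma Phi_ge0 : 0 <= Phi.
Proof. by apply: sumr_ge0 => x _; rewrite ltW // cc_pos. Qed.

Lemma Phi_le : Phi <= (#|V|)%:R.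
Proof.
apply: (@le_trans _ _ (\sum_(x : V) (1 : R))); first by apply: ler_sum => x _; apply: cc_le1.
by rewrite sumr_const.
Qed.

Lemma Qs_ge0 (S : st) : 0 <= Qs S.
Proof. by apply: sumr_ge0 => t _; rewrite sqr_ge0. Qed.

Lemma Qs_le (S : st) : Qs S <= Phi ^+ 2.
Proof.
rewrite /Qs expr2 -{1}(sum_phi S) mulr_suml; apply: ler_sum => t _.
rewrite expr2 ler_wpM2l ?phi_ge0 // -(sum_phi S) (bigD1 t) //= lerDl.
by apply: sumr_ge0 => ? _; apply: phi_ge0.
Qed.

Lemma Phi_sq_le : Phi ^+ 2 <= (#|V|)%:R ^+ 2.
Proof. by rewrite lerXn2r ?nnegrE ?Phi_ge0 ?Phi_le // ltW // n_pos. Qed.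

Lemma Delta_Qs (S : st) u v0 :
  (forall x y, fit S x = fit S y) -> adj u v0 -> S u != S v0 ->
  2 / (#|V|%:R) ^+ 4 <= Delta Qs S.
Proof.
move=> fc auv Nuv.
set n : R := (#|V|)%:R.
have np : 0 < n := n_pos.
set F0 := fit S u.
have WE : W S = n * F0.
  rewrite /totfit (eq_bigr (fun _ => F0)); last by move=> x _; exact: (fc x u).
  by rewrite sumr_const -mulr_natl.
have F0p : 0 < F0 by apply: lt_le_trans (fit_ge1 S u).
have ppE v : pp S v = n^-1 * cc v.
  rewrite /pp (fc v u) -/F0 WE /cc; field.
  by rewrite (lt0r_neq0 (dg_pos v)) (lt0r_neq0 np) (lt0r_neq0 F0p).
rewrite /Delta.
under eq_bigr do under eq_bigr do rewrite Qs_upd ppE mulrDr.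
under eq_bigr do rewrite big_split /=.
rewrite big_split /=.
have Z : \sum_v \sum_(w in nbhd adj v) n^-1 * cc v * (2 * cc w * (phi (S v) S - phi (S w) S)) = 0.
  set X := (X in X = 0).
  have k : forall x : R, x + x = 0 -> x = 0 by move=> x; lra.
  apply: k; rewrite {2}/X sym_sum /X -big_split big1 // => v _.
  rewrite -big_split big1 // => w _ /=; ring.
rewrite Z add0r.
pose G v w : R := n^-1 * cc v * (2 * (S v != S w)%:R * cc w ^+ 2).
have G0 v w : 0 <= G v w.
  rewrite /G; apply: mulr_ge0; first by apply: mulr_ge0; [rewrite invr_ge0 ltW | exact: ltW (cc_pos _)].
  apply: mulr_ge0; first by apply: mulr_ge0; apply: ler0n.
  by apply: exprn_ge0; exact: ltW (cc_pos _).
apply: (@le_trans _ _ (G u v0)).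
  rewrite /G Nuv /= mulr1.
  have cu := cc_ge u; have cv := cc_ge v0.
  have ni : 0 < n^-1 by rewrite invr_gt0.
  have e4 : 2 / n ^+ 4 = n^-1 * n^-1 * (2 * n^-1 ^+ 2).
    by field; rewrite lt0r_neq0.
  rewrite e4; apply: ler_pM.
  - by apply: mulr_ge0; apply: ltW.
  - by apply: mulr_ge0; [apply: ler0n | apply: exprn_ge0; apply: ltW].
  - by rewrite ler_pM2l.
  - rewrite ler_pM2l ?ltr0n // lerXn2r ?nnegrE //; first exact: ltW.
    exact: ltW (cc_pos _).
apply: (@le_trans _ _ (\sum_(w in nbhd adj u) G u w)).
  exact: one_term.
rewrite [in X in _ <= X](bigD1 u) //= lerDl; apply: sumr_ge0 => v _; apply: sumr_ge0 => w _.
exact: G0.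
Qed.


Local Notation k := (nfit f).
Definition idx (q : rat) : nat := index q (fitvals f).

Lemma fv_mem x : f x \in fitvals f.
Proof. by rewrite /fitvals mem_sort mem_undup map_f // mem_enum. Qed.

Lemma fv_sorted : sorted <%O (fitvals f).
Proof. by rewrite /fitvals sort_lt_sorted undup_uniq. Qed.

Lemma fv_idx x : fv f (idx (f x)) = f x.
Proof. by rewrite /fv /idx nth_index // fv_mem. Qed.

Lemma idx_lt x : (idx (f x) < k)%N.
Proof. by rewrite /idx index_mem fv_mem. Qed.

Lemma fv_leq i j : (i < k)%N -> (j < k)%N -> (fv f i <= fv f j) = (i <= j)%N.
Proof. by move=> ik jk; rewrite /fv (lt_sorted_leq_nth 0 fv_sorted). Qed.

Lemma fv_ltn i j : (i < k)%N -> (j < k)%N -> (fv f i < fv f j) = (i < j)%N.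
Proof. by move=> ik jk; rewrite ltNge fv_leq // ltnNge. Qed.

Lemma fv_in i : (i < k)%N -> exists x, f x = fv f i.
Proof.
move=> ik; have : fv f i \in fitvals f by rewrite /fv mem_nth.
rewrite /fitvals mem_sort mem_undup => /mapP [x _ ->]; by exists x.
Qed.

Definition single (S : st) : bool := [forall x, forall y, f (S x) == f (S y)].

Lemma singleP (S : st) : reflect (forall x y, f (S x) = f (S y)) (single S).
Proof.
apply: (iffP forallP) => [H x y|H x]; first by move/forallP: (H x) => /(_ y) /eqP.
by apply/forallP => y; rewrite (H x y).
Qed.

Lemma single_upd (S : st) v w : single S -> single (upd S v w).
Proof.
move/singleP => H; apply/singleP => x y; rewrite !ffunE.
by case: ifP => _; case: ifP => _; apply: H.
Qed.

Lemma mixed1 (S : st) : ~~ single S -> (1 < k)%N /\ exists x, fv f 1 <= f (S x).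
Proof.
move/singleP => H.
have [x [y Nxy]] : exists x y, f (S x) != f (S y).
  apply: contrapT => H1; apply: H => x y; apply/eqP; apply: contrapT => H2.
  by apply: H1; exists x, y; apply/negP.
have ix := idx_lt (S x); have iy := idx_lt (S y).
have Nidx : idx (f (S x)) != idx (f (S y)).
  by apply: contra Nxy => /eqP E; rewrite -fv_idx E fv_idx.
have [z [iz z1]] : exists z, (idx (f (S z)) < k)%N /\ (0 < idx (f (S z)))%N.
  case: (posnP (idx (f (S x)))) => [x0|xp]; last by exists x.
  by exists y; split => //; rewrite lt0n; move: Nidx; rewrite x0 eq_sym.
have k1 : (1 < k)%N by apply: leq_ltn_trans iz.
split => //; exists z; rewrite -fv_idx fv_leq //.
Qed.


Lemma top_level (S : st) j0 : (j0 < k)%N -> ~~ single S ->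
  (exists x, fv f j0 <= f (S x)) ->
  exists t u v0, [/\ (j0 <= t < k)%N, (0 < t)%N, adj u v0,
     (forall x, f (S x) <= fv f t) &
     [/\ fv f t <= f (S u), f (S v0) <= fv f t.-1 & f (S v0) < fv f t]].
Proof.
move=> j0k /singleP H [x1 Hx1].
have [x [y Nxy]] : exists x y, f (S x) != f (S y).
  apply: contrapT => H1; apply: H => x y; apply/eqP; apply: contrapT => H2.
  by apply: H1; exists x, y; apply/negP.
case: (@arg_maxnP V x1 predT (fun z => idx (f (S z))) isT) => m _ Hm.
set t := idx (f (S m)).
have tk : (t < k)%N by apply: idx_lt.
have Hall z : f (S z) <= fv f t.
  by rewrite -fv_idx fv_leq ?idx_lt //; apply: Hm.
have j0t : (j0 <= t)%N.
  apply: leq_trans (Hm x1 isT); rewrite -(fv_leq j0k (idx_lt _)) fv_idx //.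
have [y' Hy'] : exists y', f (S y') != fv f t.
  case: (eqVneq (f (S x)) (fv f t)) => [E|E]; last by exists x.
  by exists y; rewrite -E eq_sym.
have ny' : ~~ (fv f t <= f (S y')).
  by rewrite -ltNge lt_neqAle Hy' Hall.
have Pm : fv f t <= f (S m) by rewrite /t fv_idx.
have [u [v0 /and3P [auv Pu nPv]]] := @edge_cross (fun z => fv f t <= f (S z)) m y' Pm ny'.
have lt0 : f (S v0) < fv f t by rewrite ltNge.
have iv : (idx (f (S v0)) < t)%N by rewrite -fv_ltn ?idx_lt // fv_idx.
have t0 : (0 < t)%N by apply: leq_ltn_trans iv.
exists t, u, v0; split => //; first by rewrite j0t.
split => //.
rewrite -fv_idx fv_leq ?idx_lt //; last by apply: leq_ltn_trans tk; rewrite leq_pred.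
by rewrite -ltnS prednK.
Qed.

Local Notation nR := (#|V|%:R : R).
Definition FF i : R := ratr (fv f i).
Definition gl i (x : tau) : R := if fv f i <= f x then 1 else 0.
Definition ai i : R := FF i / (FF i - FF i.-1) * nR ^+ 3.

Lemma gl_mono i a b : 0 <= (fitR R f a - fitR R f b) * (gl i a - gl i b).
Proof.
rewrite /gl /fitR.
case: (leP (fv f i) (f a)) => ha; case: (leP (fv f i) (f b)) => hb /=;
  rewrite ?subrr ?mulr0 //.
- rewrite subr0 mulr1 subr_ge0 ler_rat; apply: ltW; exact: lt_le_trans hb ha.
- rewrite sub0r mulrN1 oppr_ge0 subr_le0 ler_rat; apply: ltW; exact: lt_le_trans ha hb.
Qed.

Lemma gl01 i x : 0 <= gl i x <= 1.
Proof. by rewrite /gl; case: ifP; rewrite ?ler01 ?lexx. Qed.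

Lemma Lg_bounds g (S : st) : (forall x, 0 <= g x <= 1) -> 0 <= Lg g S <= Phi.
Proof.
move=> g01; apply/andP; split.
  apply: sumr_ge0 => x _; case/andP: (g01 (S x)) => g0 _.
  by rewrite mulr_ge0 // ltW // cc_pos.
apply: ler_sum => x _; case/andP: (g01 (S x)) => _ g1.
by rewrite ler_piMl // ltW // cc_pos.
Qed.

Lemma FF_ge1 i : (i < k)%N -> 1 <= FF i.
Proof.
move=> ik; have [x Hx] := fv_in ik.
by rewrite /FF -Hx -(rmorph1 (ratr : rat -> R)) ler_rat fge1.
Qed.

Lemma FF_lt i : (0 < i < k)%N -> FF i.-1 < FF i.
Proof.
case/andP=> i0 ik; rewrite /FF ltr_rat fv_ltn //.
  by rewrite prednK.
by apply: leq_ltn_trans ik; apply: leq_pred.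
Qed.

Lemma ai_ge0 i : (0 < i < k)%N -> 0 <= ai i.
Proof.
move=> H; have := FF_lt H; case/andP: H => _ ik; have := FF_ge1 ik => h1 h2.
rewrite /ai; apply: mulr_ge0; last by apply: exprn_ge0; apply: ltW n_pos.
apply: divr_ge0; first lra.
by rewrite subr_ge0 ltW.
Qed.

Lemma top_drift (S : st) t u v0 : (0 < t < k)%N -> adj u v0 ->
     (forall x, f (S x) <= fv f t) -> fv f t <= f (S u) -> f (S v0) <= fv f t.-1 ->
     f (S v0) < fv f t ->
     1 <= ai t * Dl (gl t) S.
Proof.
move=> tk auv Hall Hu Hv0 Hv0'.
have [_ Db] := Dl_bound S (gl_mono t) auv.
have gu : gl t (S u) = 1 by rewrite /gl Hu.
have gv : gl t (S v0) = 0 by rewrite /gl leNgt Hv0'.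
move: Db; rewrite gu gv subr0 mulr1 => Db.
have Flt := FF_lt tk.
have F1 : 1 <= FF t by case/andP: tk => _; apply: FF_ge1.
set D := FF t - FF t.-1.
have Dp : 0 < D by rewrite /D subr_gt0.
have np := n_pos.
have Wp := W_pos S.
have A : D <= fit S u - fit S v0.
  by rewrite /D lerB // /fitS /fitR /FF ler_rat.
have WF : W S <= nR * FF t.
  apply: (@le_trans _ _ (\sum_(x : V) FF t)).
    by rewrite /totfit; apply: ler_sum => x _; rewrite /fitR /FF ler_rat.
  by rewrite sumr_const mulr_natl; exact: lexx.
have cu1 : 1 <= cc u * nR.
  by have := cc_ge u; rewrite -(ler_pM2r np) mulVf ?lt0r_neq0.
have cv1 : 1 <= cc v0 * nR.
  by have := cc_ge v0; rewrite -(ler_pM2r np) mulVf ?lt0r_neq0.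
have cu0 := cc_pos u; have cv0 := cc_pos v0.
apply: (le_trans _ (ler_wpM2l (ai_ge0 tk) Db)).
have -> : ai t * ((fit S u - fit S v0) * cc u * cc v0 / W S) =
   ((fit S u - fit S v0) * (cc u * nR) * (cc v0 * nR) * (nR * FF t)) / (D * W S).
  rewrite /ai -/D; field.
  by rewrite (lt0r_neq0 Dp) (lt0r_neq0 Wp).
rewrite ler_pdivlMr ?mulr_gt0 // mul1r.
have -> : D * W S = D * 1 * 1 * W S by ring.
have D0 : 0 <= D by exact: ltW.
apply: ler_pM; [by rewrite !mulr1 | exact: ltW | | exact: WF].
apply: ler_pM; [by rewrite !mulr1 | by [] | | exact: cv1].
apply: ler_pM; [by [] | by [] | exact: A | exact: cu1].
Qed.


Lemma sum_nat_ge0 m n' (F : nat -> R) :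
  (forall i, (m <= i < n')%N -> 0 <= F i) -> 0 <= \sum_(m <= i < n') F i.
Proof.
move=> H; rewrite big_seq; apply: sumr_ge0 => i; rewrite mem_index_iota; exact: H.
Qed.

Lemma sum_nat_le m n' (F G : nat -> R) :
  (forall i, (m <= i < n')%N -> F i <= G i) ->
  \sum_(m <= i < n') F i <= \sum_(m <= i < n') G i.
Proof.
move=> H; rewrite big_seq [X in _ <= X]big_seq; apply: ler_sum => i.
rewrite mem_index_iota; exact: H.
Qed.

Lemma Delta_ext (P P' : st -> R) (S : st) :
  (forall S', P S' = P' S') -> Delta P S = Delta P' S.
Proof.
by move=> H; rewrite /Delta; apply: eq_bigr => v _; apply: eq_bigr => w _; rewrite !H.
Qed.

Definition K : R := nR ^+ 4 / 2.
Definition Np (S : st) : R := - K * Qs S + K * Phi ^+ 2.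
Definition Dp j0 (S : st) : R := \sum_(j0 <= i < k) ai i * (Phi - Lg (gl i) S).
Definition Cm (C : bool) : R := if C then nR ^+ 6 / 2 else 0.
Definition Pot (C : bool) j0 (S : st) : R :=
  if single S then (if C then Np S else 0) else Cm C + Dp j0 S.

Lemma K_ge0 : 0 <= K.
Proof. by rewrite /K divr_ge0 // exprn_ge0 // ltW // n_pos. Qed.

Lemma Np_ge0 S : 0 <= Np S.
Proof.
rewrite /Np; have := Qs_le S; have := K_ge0 => h1 h2.
rewrite mulNr addrC subr_ge0 ler_wpM2l //.
Qed.

Lemma Np_le S : Np S <= nR ^+ 6 / 2.
Proof.
rewrite /Np; have := Qs_ge0 S; have := K_ge0 => h1 h2.
apply: (@le_trans _ _ (K * Phi ^+ 2)).
  by rewrite mulNr addrC lerBlDr lerDl mulr_ge0.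
apply: (@le_trans _ _ (K * nR ^+ 2)); first by rewrite ler_wpM2l // Phi_sq_le.
have -> : K * nR ^+ 2 = nR ^+ 6 / 2 by rewrite /K; field.
by [].
Qed.

Lemma Cm_ge0 C : 0 <= Cm C.
Proof. by rewrite /Cm; case: C => //; rewrite divr_ge0 // exprn_ge0 // ltW // n_pos. Qed.

Lemma Dp_ge0 j0 S : (0 < j0)%N -> 0 <= Dp j0 S.
Proof.
move=> j0p; apply: sum_nat_ge0 => i /andP [ji ik].
apply: mulr_ge0; first by apply: ai_ge0; rewrite ik (leq_trans j0p ji).
by case/andP: (Lg_bounds S (gl01 i)) => _; rewrite subr_ge0.
Qed.

Lemma Dp_le j0 S : (0 < j0)%N -> Dp j0 S <= \sum_(j0 <= i < k) ai i * Phi.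
Proof.
move=> j0p; apply: sum_nat_le => i /andP [ji ik].
apply: ler_wpM2l; first by apply: ai_ge0; rewrite ik (leq_trans j0p ji).
by case/andP: (Lg_bounds S (gl01 i)) => h _; rewrite lerBlDr lerDl.
Qed.

Lemma Pot_ge0 C j0 S : (0 < j0)%N -> 0 <= Pot C j0 S.
Proof.
move=> j0p; rewrite /Pot; case: (single S); first by case: C => //; apply: Np_ge0.
by rewrite addr_ge0 ?Cm_ge0 ?Dp_ge0.
Qed.

Lemma Pot_le C j0 S : (0 < j0)%N -> Pot C j0 S <= Cm C + Dp j0 S.
Proof.
move=> j0p; rewrite /Pot; case: (single S) => //.
rewrite /Cm; case: C; last by rewrite add0r Dp_ge0.
by rewrite -[X in X <= _]addr0 lerD ?Np_le ?Dp_ge0.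
Qed.

Lemma Delta_Dp j0 S :
  Delta (Dp j0) S = - \sum_(j0 <= i < k) ai i * Dl (gl i) S.
Proof.
rewrite /Dp (@Delta_sum _ (index_iota j0 k) ai (fun i S' => Phi - Lg (gl i) S')).
rewrite -sumrN; apply: eq_bigr => i _.
rewrite (@Delta_ext _ (fun S' => -1 * Lg (gl i) S' + Phi)); last by move=> S'; ring.
by rewrite Delta_aff Delta_Lg; ring.
Qed.

Lemma main_bound (T : pred st) j0 (C : bool) (M0 : st) :
  (0 < j0)%N ->
  (forall S, ~~ T S -> single S -> C /\ exists x y, S x != S y) ->
  (forall S, ~~ T S -> ~~ single S -> (j0 < k)%N /\ exists x, fv f j0 <= f (S x)) ->
  (exp_hit R adj f T M0 <= (Cm C + \sum_(j0 <= i < k) ai i * Phi)%:E)%E.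
Proof.
move=> j0p Hs Hm.
apply: (le_trans (@drift_bound R V tau adj f (fun x => fge0 x) T (Pot C j0) M0 _ _)).
- by move=> S; apply: Pot_ge0.
- move=> S nT.
  case sS: (single S).
    have [CC [x [y Nxy]]] := Hs S nT sS.
    have nyx : ~~ (fun z => S z == S x) y by rewrite /= eq_sym.
    have [u [v0 /and3P [auv /eqP Eu Nv]]] := @edge_cross (fun z => S z == S x) x y (eqxx _) nyx.
    have Nuv : S u != S v0 by rewrite Eu eq_sym.
    rewrite (@EP_ext _ Np); last by move=> v w; rewrite /Pot single_upd // CC.
    rewrite EP_Delta /Pot sS CC /Np Delta_aff -/(Np S).
    have fc : forall x y, fit S x = fit S y.
      by move=> a b; rewrite /fitS /fitR; move/singleP: sS => /(_ a b) ->.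
    have DQ := Delta_Qs fc auv Nuv.
    have hK : K * (2 / nR ^+ 4) = 1.
      by rewrite /K; field; rewrite lt0r_neq0 // n_pos.
    suff : 1 <= K * Delta Qs S by rewrite -/(Np S) mulNr; lra.
    by rewrite -hK ler_wpM2l // K_ge0.
  apply: (le_trans (@EP_le _ (fun S' => 1 * Dp j0 S' + Cm C) _ _)).
    by move=> v w; rewrite mul1r addrC; apply: Pot_le.
  rewrite EP_Delta Delta_aff mul1r Delta_Dp /Pot sS mul1r.
  have [j0k ex] := Hm S nT (negbT sS).
  have [t [u [v0 [/andP [j0t tk] t0 auv Hall [Hu Hv1 Hv2]]]]] := top_level j0k (negbT sS) ex.
  have tk' : (0 < t < k)%N by rewrite t0 tk.
  have H1 := top_drift tk' auv Hall Hu Hv1 Hv2.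
  suff : 1 <= \sum_(j0 <= i < k) ai i * Dl (gl i) S by lra.
  apply: (le_trans H1).
  rewrite (bigD1_seq t) /= ?mem_index_iota ?j0t ?iota_uniq //.
  rewrite lerDl big_seq_cond; apply: sumr_ge0 => i /andP [].
  rewrite mem_index_iota => /andP [ji ik] _.
  apply: mulr_ge0; first by apply: ai_ge0; rewrite ik (leq_trans j0p ji).
  by case: (Dl_bound S (gl_mono i) auv).
- rewrite lee_fin; apply: (le_trans (Pot_le C M0 j0p)).
  by rewrite lerD2l Dp_le.
Qed.

End Moran2.

Lemma card_tau_le (V tau : finType) (M0 : {ffun V -> tau}) (v0 : V) :
  in_Omega0 M0 -> (#|tau| <= #|V|)%N.
Proof.
move=> Om.
pose g (j : tau) : V := odflt v0 [pick v | M0 v == j].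
have gK : cancel g M0.
  move=> j; rewrite /g; case: pickP => [v /eqP //|H].
  by have [v Hv] := Om j; move: (H v); rewrite Hv eqxx.
exact: leq_card (can_inj gK).
Qed.

Lemma type_abs_pair (V tau : finType) (S : {ffun V -> tau}) beta :
  ~~ type_abs beta S -> exists x y, S x = beta /\ S y != beta.
Proof.
rewrite /type_abs negb_or => /andP [/forallPn [y Hy] /forallPn [x Hx]].
by exists x, y; split => //; apply/eqP; rewrite -[_ == _]negbK.
Qed.

Lemma final_arith (R : realType) (V tau : finType) (adj : rel V) (f : tau -> rat)
   (fge1 : forall x, 1 <= f x) (adjS : symmetric adj) (adjI : irreflexive adj)
   (conn : connected_graph adj) (nV : (1 < #|V|)%N)
   j0 (C : bool) (e : nat) :
  (0 < j0)%N -> (C -> (2 <= e)%N) -> (1 <= e)%N ->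
  Cm R V C + \sum_(j0 <= i < nfit f) ai R V f i * Phi R adj <=
  (e%:R - 1) * (#|V|%:R) ^+ 6 +
  \sum_(j0 <= i < nfit f) ratr (fv f i) / (ratr (fv f i) - ratr (fv f i.-1)) * ((#|V|%:R : R) + 1) * (#|V|%:R) ^+ 3.
Proof.
move=> j0p HC e1.
have np := n_pos R nV.
have n6 : 0 <= (#|V|%:R : R) ^+ 6 by rewrite exprn_ge0 // ltW.
apply: lerD.
  rewrite /Cm; case: C HC => [/(_ isT) e2|_].
    have he : 1 <= (e%:R : R) - 1.
      have : (2 : R) <= e%:R by rewrite ler_nat.
      lra.
    apply: (@le_trans _ _ ((#|V|%:R : R) ^+ 6)).
      by rewrite ler_pdivrMr // ler_peMr // ler1n.
    by rewrite ler_peMl.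
  by rewrite mulr_ge0 // subr_ge0 ler1n.
apply: sum_nat_le => i /andP [ji ik].
have a0 := @ai_ge0 R V tau f fge1 nV i.
rewrite /ai in a0 *.
rewrite [X in _ <= X]mulrAC; apply: ler_wpM2l.
  by apply: a0; rewrite ik (leq_trans j0p ji).
by apply: (le_trans (Phi_le R conn nV)); rewrite lerDl ler01.
Qed.

Lemma idx_fv (tau : finType) (f : tau -> rat) j : (j < nfit f)%N -> idx f (fv f j) = j.
Proof. by move=> jk; rewrite /idx /fv index_uniq // /fitvals sort_uniq undup_uniq. Qed.

Unset Implicit Arguments.

Theorem theorem18 (R : realType) (V tau : finType) (adj : rel V) (f : tau -> rat)
  (M0 : {ffun V -> tau}) :
  simple_graph adj -> connected_graph adj ->
  (1 < #|tau|)%N ->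
  (forall x, 1 <= f x) ->
  in_Omega0 M0 ->
  let n : R := (#|V|)%:R in
  let k := nfit f in
  let F i : R := ratr (fv f i) in
  let S j : R := \sum_(j <= i < k) F i / (F i - F i.-1) * (n + 1) * n ^+ 3 in
  [/\ (absA R adj f M0 <= (((ellmax f)%:R - 1) * n ^+ 6 + S 1%N)%:E)%E,
      (forall (j : nat) (beta : tau), (1 <= j < k)%N -> f beta = fv f j ->
         (absAj R adj f beta M0 <= (((ell f j)%:R - 1) * n ^+ 6 + S j)%:E)%E) &
      (forall beta : tau, f beta = fv f 0 ->
         (absAj R adj f beta M0 <= (((ell f 0)%:R - 1) * n ^+ 6 + S 1%N)%:E)%E)].
Proof.
move=> [adjS adjI] conn tau1 fge1 Om n k F S.
have [x0 _] : exists x0 : tau, x0 \in tau by apply/card_gt0P; apply: leq_trans tau1.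
have [v0 _] := Om x0.
have nV : (1 < #|V|)%N by apply: leq_trans tau1 (card_tau_le v0 Om).
have ell1 i : (i < nfit f)%N -> (1 <= ell f i)%N.
  move=> ik; have [x Hx] := fv_in ik.
  by rewrite /ell; apply/card_gt0P; exists x; rewrite inE Hx.
have ellm i : (i < nfit f)%N -> (ell f i <= ellmax f)%N.
  by move=> ik; rewrite /ellmax; apply: (@leq_bigmax _ (fun i : 'I_(nfit f) => ell f i) (Ordinal ik)).
have ell2 (S0 : state V tau) x y : single f S0 -> S0 x != S0 y ->
    (2 <= ell f (idx f (f (S0 x))))%N.
  move=> /singleP sS Nxy; rewrite /ell; apply/card_gt1P; exists (S0 x), (S0 y).
  by rewrite !inE fv_idx (sS y x) eqxx.
have k0 := idx_lt f x0.
split.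
- apply: le_trans (@main_bound R V tau adj f fge1 adjS adjI conn nV (@total_abs V tau) 1
     (2 <= ellmax f)%N M0 isT _ _) _.
  + move=> S0 nT sS.
    move/existsPn: nT => /(_ (S0 v0)) /forallPn [y Hy].
    split; last by exists y, v0.
    apply: leq_trans (ell2 _ _ _ sS Hy) (ellm _ (idx_lt f _)).
  + by move=> S0 _ nS; apply: mixed1.
  + rewrite lee_fin; apply: final_arith => //.
    exact: leq_trans (ell1 _ k0) (ellm _ k0).
- move=> j beta /andP [j1 jk] fb.
  apply: le_trans (@main_bound R V tau adj f fge1 adjS adjI conn nV (type_abs beta) j
     (2 <= ell f j)%N M0 j1 _ _) _.
  + move=> S0 nT sS; have [x [y [Ex Ny]]] := type_abs_pair nT.
    have Nxy : S0 x != S0 y by rewrite Ex eq_sym.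
    split; last by exists x, y.
    by have := ell2 _ _ _ sS Nxy; rewrite Ex fb idx_fv.
  + move=> S0 nT _; have [x [y [Ex Ny]]] := type_abs_pair nT.
    by split => //; exists x; rewrite Ex fb.
  + rewrite lee_fin; apply: final_arith => //.
    by rewrite /ell -fb; apply/card_gt0P; exists beta; rewrite inE.
- move=> beta fb.
  apply: le_trans (@main_bound R V tau adj f fge1 adjS adjI conn nV (type_abs beta) 1
     (2 <= ell f 0)%N M0 isT _ _) _.
  + move=> S0 nT sS; have [x [y [Ex Ny]]] := type_abs_pair nT.
    have Nxy : S0 x != S0 y by rewrite Ex eq_sym.
    split; last by exists x, y.
    by have := ell2 _ _ _ sS Nxy; rewrite Ex fb idx_fv // (leq_ltn_trans (leq0n _) k0).
  + by move=> S0 _ nS; apply: mixed1.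
  + rewrite lee_fin; apply: final_arith => //.
    by rewrite /ell -fb; apply/card_gt0P; exists beta; rewrite inE.
Qed.
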